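(* Let $k\geq 2$ be an integer and let $P$ be a finite poset of width $w$ that does not contain $\mathbf{k}+\mathbf{k}$ as an induced subposet. Then $P$ extends some interval order $Q$ of width at most $(2k-3)w$.
   Context: The width of a poset is the maximum size of an antichain. $\mathbf{k}+\mathbf{k}$ denotes the poset consisting of two disjoint chains $A,B$ with $|A|=|B|=k$ in which every element of $A$ is incomparable with every element of $B$; ''$P$ does not contain $\mathbf{k}+\mathbf{k}$'' means $P$ has no induced subposet isomorphic to it, i.e. there are no two disjoint chains of size $k$ in $P$ such that every element of one is incomparable to every element of the other. A poset $P$ extends a poset $Q$ if they have the same ground set and $u<v$ in $Q$ implies $u<v$ in $P$. A poset is an interval order if there is an assignment of closed real intervals $I(u)$ to its elements such that $u<v$ if and only if $I(u)=[a,b]$, $I(v)=[c,d]$ with $b<c$. *)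

(* Defs.v *)
From Stdlib Require Import Reals.
From mathcomp Require Import all_boot.
Set Implicit Arguments. Unset Strict Implicit. Unset Printing Implicit Defensive.

Definition strict_order (T : finType) (lt : rel T) : Prop :=
  (forall x, ~~ lt x x) /\ (forall x y z, lt x y -> lt y z -> lt x z).

Definition comparable (T : finType) (lt : rel T) (x y : T) : bool :=
  [|| x == y, lt x y | lt y x].

Definition is_chain (T : finType) (lt : rel T) (A : {set T}) : bool :=
  [forall x in A, forall y in A, comparable lt x y].

Definition is_antichain (T : finType) (lt : rel T) (A : {set T}) : bool :=
  [forall x in A, forall y in A, (x != y) ==> ~~ comparable lt x y].

Definition width (T : finType) (lt : rel T) : nat :=
  \max_(A : {set T} | is_antichain lt A) #|A|.

Definition contains_kk (T : finType) (lt : rel T) (k : nat) : Prop :=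
  exists A B : {set T},
    [/\ is_chain lt A, is_chain lt B, #|A| = k, #|B| = k &
        [disjoint A & B]] /\
        (forall a b, a \in A -> b \in B -> ~~ comparable lt a b).

Definition interval_order (T : finType) (lt : rel T) : Prop :=
  exists l r : T -> R,
    (forall x, Rle (l x) (r x)) /\
    (forall x y, lt x y <-> Rlt (r x) (l y)).

Definition extends (T : finType) (ltP ltQ : rel T) : Prop :=
  forall u v, ltQ u v -> ltP u v.

(* Main.v *)
Require Import Defs.
From Stdlib Require Import Reals.
From mathcomp Require Import all_boot.
From mathcomp Require Import zify.
Set Implicit Arguments. Unset Strict Implicit. Unset Printing Implicit Defensive.

Fixpoint reach (T : finType) (lt : rel T) (j : nat) (u v : T) : bool :=
  match j with
  | 0 => u == v
  | j'.+1 => [exists w, lt u w && reach lt j' w v]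
  end.

Lemma reach_add (T : finType) (lt : rel T) a b u v :
  reach lt (a + b) u v <-> exists w, reach lt a u w /\ reach lt b w v.
Proof.
elim: a u => [|a IH] u /=.
  split => [H | [w [/eqP -> H]]] //; exists u; by rewrite eqxx.
rewrite ?addSn /=; split.
  case/existsP => w /andP [uw /IH [w' [h1 h2]]]; exists w'; split => //.
  by apply/existsP; exists w; rewrite uw h1.
case => w' [/existsP [w /andP [uw h1]] h2]; apply/existsP; exists w.
by rewrite uw /=; apply/IH; exists w'.
Qed.

Definition lee (T : finType) (lt : rel T) (a b : T) := (a == b) || lt a b.

Lemma reach_lt (T : finType) (lt : rel T) j u v :
  (forall x y z, lt x y -> lt y z -> lt x z) ->
  reach lt j.+1 u v -> lt u v.
Proof.
move=> tr; elim: j u => [|j IH] u /=.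
  by case/existsP => w /andP [uw /eqP <-].
case/existsP => w /andP [uw h]; apply: tr uw _; apply: IH; exact: h.
Qed.

Lemma reach_lee (T : finType) (lt : rel T) j u v :
  (forall x y z, lt x y -> lt y z -> lt x z) ->
  reach lt j u v -> lee lt u v.
Proof.
move=> tr; case: j => [|j] h; first by rewrite /lee (eqP h) eqxx.
by rewrite /lee (reach_lt tr h) orbT.
Qed.

Lemma lee_lt (T : finType) (lt : rel T) a b c :
  (forall x y z, lt x y -> lt y z -> lt x z) ->
  lee lt a b -> lt b c -> lt a c.
Proof. by move=> tr /orP [/eqP -> //| ab bc]; apply: tr ab bc. Qed.

Lemma lt_lee (T : finType) (lt : rel T) a b c :
  (forall x y z, lt x y -> lt y z -> lt x z) ->
  lt a b -> lee lt b c -> lt a c.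
Proof. by move=> tr ab /orP [/eqP <- //| bc]; apply: tr ab bc. Qed.

Lemma lee_trans (T : finType) (lt : rel T) a b c :
  (forall x y z, lt x y -> lt y z -> lt x z) ->
  lee lt a b -> lee lt b c -> lee lt a c.
Proof.
move=> tr /orP [/eqP -> //| ab] bc.
by rewrite /lee (lt_lee tr ab bc) orbT.
Qed.

Lemma chainP (T : finType) (lt : rel T) (A : {set T}) :
  is_chain lt A <-> forall x y, x \in A -> y \in A -> Defs.comparable lt x y.
Proof.
split.
  by move=> /forallP H x y hx hy; move: (H x) => /implyP /(_ hx) /forallP /(_ y) /implyP /(_ hy).
move=> H; apply/forallP => x; apply/implyP => hx; apply/forallP => y; apply/implyP => hy.
exact: H.
Qed.

Lemma antichainP (T : finType) (lt : rel T) (A : {set T}) :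
  is_antichain lt A <-> forall x y, x \in A -> y \in A -> x != y -> ~~ Defs.comparable lt x y.
Proof.
split.
  move=> /forallP H x y hx hy.
  by move: (H x) => /implyP /(_ hx) /forallP /(_ y) /implyP /(_ hy) /implyP.
move=> H; apply/forallP => x; apply/implyP => hx; apply/forallP => y; apply/implyP => hy.
apply/implyP; exact: H.
Qed.

Lemma reach_chain (T : finType) (lt : rel T) j u v :
  (forall x, ~~ lt x x) -> (forall x y z, lt x y -> lt y z -> lt x z) ->
  reach lt j u v ->
  exists S : {set T}, [/\ is_chain lt S, #|S| = j.+1,
     forall s, s \in S -> lee lt u s & forall s, s \in S -> lee lt s v].
Proof.
move=> irr tr; elim: j u => [|j IH] u /=.
  move=> /eqP <-; exists [set u]; split.
  - by apply/chainP => x y; rewrite !inE => /eqP -> /eqP ->; rewrite /Defs.comparable eqxx.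
  - by rewrite cards1.
  - by move=> s; rewrite inE /lee => /eqP ->; rewrite eqxx.
  - by move=> s; rewrite inE /lee => /eqP ->; rewrite eqxx.
case/existsP => w /andP [uw hw]; case: (IH _ hw) => S [ch cS lo hi].
have uS : u \notin S.
  apply/negP => /lo /orP [/eqP wu | wu]; first by move: uw; rewrite wu (negbTE (irr u)).
  by move: (irr u); rewrite (tr _ _ _ uw wu).
have lo' : forall s, s \in S -> lt u s by move=> s /lo; apply: lt_lee.
exists (u |: S); split.
- apply/chainP => x y; rewrite !in_setU1 => /orP [/eqP -> | hx] /orP [/eqP -> | hy].
  + by rewrite /Defs.comparable eqxx.
  + by rewrite /Defs.comparable (lo' _ hy) orbT.
  + by rewrite /Defs.comparable (lo' _ hx) !orbT.
  + by move/chainP: ch; apply.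
- by rewrite cardsU1 uS cS.
- by move=> s; rewrite in_setU1 => /orP [/eqP -> | /lo' h]; rewrite /lee ?eqxx ?h ?orbT.
- move=> s; rewrite in_setU1 => /orP [/eqP -> | /hi //].
  have : reach lt j.+1 u v by apply/existsP; exists w; rewrite uw; exact: hw.
  by move/(reach_lt tr); rewrite /lee => ->; rewrite orbT.
Qed.

Definition fB (T : finType) (lt : rel T) (k : nat) (v : T) : nat :=
  #|[set u | reach lt k.-1 u v]|.
Definition rB (T : finType) (lt : rel T) (k : nat) (x : T) : nat :=
  \max_(z | ~~ lt x z) fB lt k z.
Definition ltQ (T : finType) (lt : rel T) (k : nat) : rel T :=
  fun x y => rB lt k x < fB lt k y.

Lemma key (T : finType) (lt : rel T) m t x1 y :
  (forall x, ~~ lt x x) -> (forall x y z, lt x y -> lt y z -> lt x z) ->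
  ~ contains_kk lt m.+2 ->
  fB lt m.+2 y <= t -> t <= rB lt m.+2 x1 -> reach lt (m + (1 + m)) x1 y -> False.
Proof.
move=> irr tr nokk hy hx /reach_add [xa [h1 /reach_add [xb [h2 h3]]]].
have xab : lt xa xb by move: h2 => /existsP [w /andP [h /eqP <-]].
have h1b : reach lt m.+1 x1 xb.
  have : reach lt (m + 1) x1 xb.
    apply/reach_add; exists xa; split => //; apply/existsP; exists xb; by rewrite xab eqxx.
  by rewrite addn1.
case: (@arg_maxnP T x1 (fun z => ~~ lt x1 z) (fB lt m.+2) (irr x1)) => z x1z zmax.
have tz : t <= fB lt m.+2 z.
  by apply: leq_trans hx _; apply/bigmax_leqP => i hi; exact: zmax.
have x1xb : lt x1 xb := lee_lt tr (reach_lee tr h1) xab.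
have sub : [set u | reach lt m.+1 u z] \proper [set u | reach lt m.+1 u y].
  apply/properP; split.
    apply/subsetP => u; rewrite !inE => hu.
    case uxb: (lt u xb).
      have : reach lt (1 + m) u y.
        apply/reach_add; exists xb; split => //; apply/existsP; exists xb; by rewrite uxb eqxx.
      by rewrite add1n.
    exfalso; apply: nokk.
    case: (reach_chain irr tr h1b) => X [cX sX loX hiX].
    case: (reach_chain irr tr hu) => E [cE sE loE hiE].
    have uz : lt u z := reach_lt tr hu.
    have inc : forall a s, a \in X -> s \in E -> ~~ Defs.comparable lt a s.
      move=> a s ha hs; rewrite /Defs.comparable; apply/negP => /or3P [/eqP as_ | as_ | sa].
      - subst s.
        have : lee lt x1 z := lee_trans tr (loX _ ha) (hiE _ hs).
        case/orP => [/eqP ez | ]; last by rewrite (negbTE x1z).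
        subst z; move: uxb; by rewrite (tr _ _ _ uz x1xb).
      - have : lt x1 z := lt_lee tr (lee_lt tr (loX _ ha) as_) (hiE _ hs).
        by rewrite (negbTE x1z).
      - have : lt u xb := lt_lee tr (lee_lt tr (loE _ hs) sa) (hiX _ ha).
        by rewrite uxb.
    exists X, E; split; [split => // | exact: inc].
    rewrite disjoint_subset; apply/subsetP => a ha; rewrite inE; apply/negP => hE.
    by move: (inc a a ha hE); rewrite /Defs.comparable eqxx.
  exists xa.
    rewrite inE; apply/existsP; exists xb; rewrite xab; exact: h3.
  rewrite inE; apply/negP => /(reach_lt tr) xaz.
  have : lt x1 z := lee_lt tr (reach_lee tr h1) xaz.
  by rewrite (negbTE x1z).
have := proper_card sub; rewrite ltnNge => /negP; apply.
exact: leq_trans hy tz.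
Qed.

Lemma count_levels (T : finType) (A : {set T}) (g : T -> nat) N w :
  (forall x, x \in A -> g x < N) ->
  (forall j, #|[set x in A | g x == j]| <= w) -> #|A| <= N * w.
Proof.
elim: N A => [|N IH] A hg hl.
  rewrite mul0n leqn0 cards_eq0; apply/eqP/setP => x; rewrite inE.
  by apply/negbTE/negP => /hg; rewrite ltn0.
rewrite mulSn.
have eA : A = [set x in A | g x == N] :|: [set x in A | g x < N].
  apply/setP => x; rewrite !inE; case hx: (x \in A) => //=.
  by have := hg x hx; rewrite ltnS leq_eqVlt.
rewrite eA; apply: leq_trans (leq_card_setU _ _) _; apply: leq_add; first exact: hl.
apply: IH.
  by move=> x; rewrite inE => /andP [_ ->].
move=> j; apply: leq_trans (hl j); apply: subset_leq_card; apply/subsetP => x.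
by rewrite !inE => /andP [/andP [-> _] ->].
Qed.

Lemma mirsky (T : finType) (lt : rel T) N (A : {set T}) :
  (forall x, ~~ lt x x) -> (forall x y z, lt x y -> lt y z -> lt x z) ->
  0 < N -> (forall u v, u \in A -> v \in A -> ~~ reach lt N u v) ->
  #|A| <= N * width lt.
Proof.
move=> irr tr N0 noch.
pose P x := fun j : 'I_N => [exists u in A, reach lt j u x].
pose g x := \max_(j : 'I_N | P x j) (nat_of_ord j).
have gN x : g x < N.
  rewrite -(prednK N0) ltnS; apply/bigmax_leqP => j _; rewrite -ltnS prednK //.
have gA : forall x, x \in A -> exists2 u, u \in A & reach lt (g x) u x.
  move=> x hx; pose i0 := Ordinal N0.
  have Pi0 : P x i0 by apply/existsP; exists x; rewrite hx /= eqxx.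
  case: (@arg_maxnP _ i0 (P x) (fun j : 'I_N => nat_of_ord j) Pi0) => j Pj jmax.
  have -> : g x = j.
    apply/eqP; rewrite eqn_leq; apply/andP; split.
      by apply/bigmax_leqP => i hi; exact: jmax.
    by rewrite /g; apply: leq_bigmax_cond.
  by case/existsP: Pj => u /andP [hu hr]; exists u.
have incr : forall x y, x \in A -> y \in A -> lt x y -> g x < g y.
  move=> x y hx hy xy; case: (gA x hx) => u hu hr.
  have hr' : reach lt (g x).+1 u y.
    rewrite -addn1; apply/reach_add; exists x; split => //.
    by apply/existsP; exists y; rewrite xy eqxx.
  case: (ltnP (g x).+1 N) => [lt1 | ge1].
    have Py : P y (Ordinal lt1) by apply/existsP; exists u; rewrite hu.
    by rewrite /g; apply: (leq_bigmax_cond _ Py).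
  have eN : (g x).+1 = N by apply/eqP; rewrite eqn_leq ge1 gN.
  by move: (noch u y hu hy); rewrite -eN hr'.
apply: (@count_levels _ _ g) => [x _ | j]; first exact: gN.
rewrite /width; apply: (@leq_bigmax_cond _ (fun B => is_antichain lt B) (fun B => #|B|)).
apply/antichainP => x y; rewrite !inE => /andP [hx /eqP gx] /andP [hy /eqP gy] xy.
rewrite /Defs.comparable (negbTE xy) /=; apply/norP; split; apply/negP => h.
  by have := incr _ _ hx hy h; rewrite gx gy ltnn.
by have := incr _ _ hy hx h; rewrite gx gy ltnn.
Qed.

Theorem theorem1 (k : nat) (T : finType) (ltP : rel T) :
  2 <= k -> strict_order ltP -> ~ contains_kk ltP k ->
  exists ltQ : rel T,
    [/\ strict_order ltQ, interval_order ltQ, extends ltP ltQ &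
        width ltQ <= (2 * k - 3) * width ltP].
Proof.
case: k => [|[|m]] // _ [irr tr] nokk.
have fr x : fB ltP m.+2 x <= rB ltP m.+2 x.
  by rewrite /rB; apply: leq_bigmax_cond; exact: irr x.
exists (ltQ ltP m.+2); split.
- split.
    by move=> x; rewrite /ltQ -leqNgt; exact: fr.
  move=> x y z; rewrite /ltQ => h1 h2.
  exact: ltn_trans h1 (leq_ltn_trans (fr y) h2).
- exists (fun x => INR (fB ltP m.+2 x)), (fun x => INR (rB ltP m.+2 x)); split.
    by move=> x; apply: le_INR; apply/ssrnat.leP; exact: fr.
  move=> x y; rewrite /ltQ; split => h.
    by apply: lt_INR; apply/ssrnat.ltP; exact h.
  by apply/ssrnat.ltP; apply: INR_lt; exact h.
- move=> u v; rewrite /ltQ => h; apply/negPn/negP => nuv.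
  move: h; rewrite ltnNge => /negP; apply; rewrite /rB.
  exact: (@leq_bigmax_cond T (fun z => ~~ ltP u z) (fB ltP m.+2) v nuv).
- have e : 2 * m.+2 - 3 = m + (1 + m) by lia.
  rewrite e /width; apply/bigmax_leqP => A hA.
  case: (set_0Vmem A) => [-> | [a0 ha0]]; first by rewrite cards0.
  case: (@arg_maxnP T a0 (fun x => x \in A) (fB ltP m.+2) ha0) => a ha amax.
  apply: mirsky => //; first by lia.
  move=> u v hu hv; apply/negP => hr.
  apply: (@key T ltP m (fB ltP m.+2 a) u v irr tr nokk (amax v hv) _ hr).
  case: (eqVneq u a) => [-> | ua]; first exact: fr.
  move/antichainP: hA => /(_ u a hu ha ua).
  rewrite /Defs.comparable (negbTE ua) /= negb_or => /andP [h _].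
  by rewrite /ltQ in h; rewrite leqNgt.
Qed.
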